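(* Let $\alpha\in(1/2,1/\sqrt2)$ and $B\coloneqq\overline{R_\varepsilon\setminus\big(R_0\cap[H_+^\delta\cup H_-^\delta]\big)}$. For any two distinct finite words $w\ne w'$ in $\{1,2\}^*$ and any $t\in\mathbb{R}$, $F_w^t(B)\cap F_{w'}^t(B)=\emptyset$.
   Context: Constants: $\varepsilon=\frac1{4\alpha}-\frac1{2\sqrt2}$, $\delta=\frac14-\frac{\alpha}{2\sqrt2}$. Let $\eta\in C_c^\infty(\mathbb{R})$ be nonnegative with support in $(0,1)$ and $\int_0^1\eta=\delta$. $\mathcal{R}(x_1,x_2)=(-x_2,x_1)$. For $t\in\mathbb{R}$, $F_1^t(x)=\big(1-\int_0^t\eta,0\big)+\alpha\mathcal{R}x$, $F_2^t(x)=\big(-1+\int_0^t\eta,0\big)+\alpha\mathcal{R}x$, and for $w\in\{1,2\}^k$, $F_w^t=F_{w_1}^t\circ\cdots\circ F_{w_k}^t$, $F_\emptyset^t=\mathrm{Id}$; $\{1,2\}^*=\bigcup_{k\ge0}\{1,2\}^k$. $R_\xi=[-2-\xi,2+\xi]\times[-\sqrt2-\xi,\sqrt2+\xi]$; $H_\pm^\xi=\{x:\pm x_1\ge\xi\}$. *)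

(* Defs.v *)
From Stdlib Require Import Reals Lra List ClassicalEpsilon.
Open Scope R_scope.

Definition pt := (R * R)%type.

Definition eps_c (alpha : R) : R := / (4 * alpha) - / (2 * sqrt 2).
Definition delta_c (alpha : R) : R := / 4 - alpha / (2 * sqrt 2).

Definition smooth (f : R -> R) : Prop :=
  exists D : nat -> R -> R,
    (forall x, D 0%nat x = f x) /\
    (forall n x, derivable_pt_lim (D n) x (D (S n) x)).

Definition supp_in_01 (f : R -> R) : Prop :=
  exists a b, 0 < a /\ a <= b /\ b < 1 /\
    forall x, (x < a \/ b < x) -> f x = 0.

(* Riemann integral int_a^b f (Stdlib convention, so int_a^b = - int_b^a);
   the value does not depend on the integrability proof (RiemannInt_P5). *)
Definition Rint (f : R -> R) (a b : R) : R :=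
  epsilon (inhabits 0)
    (fun r => exists pr : Riemann_integrable f a b, RiemannInt pr = r).

Definition rot (x : pt) : pt := (- snd x, fst x).

Inductive letter := L1 | L2.

Definition Fmap (alpha : R) (eta : R -> R) (t : R) (i : letter) (x : pt) : pt :=
  let s := Rint eta 0 t in
  match i with
  | L1 => (1 - s + alpha * fst (rot x), alpha * snd (rot x))
  | L2 => (-1 + s + alpha * fst (rot x), alpha * snd (rot x))
  end.

Definition Fword (alpha : R) (eta : R -> R) (t : R) (w : list letter) (x : pt) : pt :=
  fold_right (fun i y => Fmap alpha eta t i y) x w.

Definition Rect (xi : R) (x : pt) : Prop :=
  - 2 - xi <= fst x <= 2 + xi /\ - sqrt 2 - xi <= snd x <= sqrt 2 + xi.
Definition Hplus (xi : R) (x : pt) : Prop := fst x >= xi.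
Definition Hminus (xi : R) (x : pt) : Prop := - fst x >= xi.

Definition closure (S : pt -> Prop) (x : pt) : Prop :=
  forall r, 0 < r -> exists y, S y /\
    (fst x - fst y)^2 + (snd x - snd y)^2 < r^2.

Definition Bset (alpha : R) : pt -> Prop :=
  closure (fun x => Rect (eps_c alpha) x /\
    ~ (Rect 0 x /\ (Hplus (delta_c alpha) x \/ Hminus (delta_c alpha) x))).

Definition image (f : pt -> pt) (S : pt -> Prop) (y : pt) : Prop :=
  exists x, S x /\ f x = y.

(* Main.v *)
Require Import Defs.
From Stdlib Require Import Reals List.
From Stdlib Require Import Lra Psatz ClassicalEpsilon FunctionalExtensionality.
Open Scope R_scope.

Lemma eta_cont (eta : R -> R) : smooth eta -> forall x, continuity_pt eta x.
Proof.
  intros [D [H0 H1]] x.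
  assert (E : D 0%nat = eta) by (apply functional_extensionality; auto).
  rewrite <- E. apply derivable_continuous_pt. exists (D 1%nat x). apply H1.
Qed.

Lemma integ (eta : R -> R) : smooth eta -> forall a b, Riemann_integrable eta a b.
Proof.
  intros Hs a b. destruct (Rle_dec a b) as [h|h].
  - apply continuity_implies_RiemannInt; auto. intros; apply eta_cont; auto.
  - apply RiemannInt_P1. apply continuity_implies_RiemannInt; [lra|].
    intros; apply eta_cont; auto.
Qed.

Lemma Rint_eq (eta : R -> R) a b (pr : Riemann_integrable eta a b) :
  Rint eta a b = RiemannInt pr.
Proof.
  unfold Rint.
  destruct (epsilon_spec (inhabits 0)
     (fun r => exists pr : Riemann_integrable eta a b, RiemannInt pr = r))
     as [pr' Hp].
  { exists (RiemannInt pr). exists pr. reflexivity. }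
  rewrite <- Hp. apply RiemannInt_P5.
Qed.

Lemma int_zero (eta : R -> R) a b (pr : Riemann_integrable eta a b) :
  a <= b -> (forall x, a < x < b -> eta x = 0) -> RiemannInt pr = 0.
Proof.
  intros hab H.
  rewrite (RiemannInt_P18 pr (RiemannInt_P14 a b 0) hab).
  - rewrite RiemannInt_P15. ring.
  - intros x hx. unfold fct_cte. auto.
Qed.

Lemma int_nonneg (eta : R -> R) a b (pr : Riemann_integrable eta a b) :
  a <= b -> (forall x, 0 <= eta x) -> 0 <= RiemannInt pr.
Proof.
  intros hab H.
  assert (h := RiemannInt_P19 (RiemannInt_P14 a b 0) pr hab).
  rewrite RiemannInt_P15 in h. unfold fct_cte in h.
  assert (0 * (b - a) <= RiemannInt pr) by (apply h; intros; auto). lra.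
Qed.

Lemma s_bounds (eta : R -> R) d :
  smooth eta -> (forall x, 0 <= eta x) -> supp_in_01 eta -> Rint eta 0 1 = d ->
  forall t, 0 <= Rint eta 0 t <= d.
Proof.
  intros Hs Hn [a [b [ha [hab [hb Hz]]]]] Hd t.
  rewrite (Rint_eq _ _ _ (integ eta Hs 0 1)) in Hd.
  rewrite (Rint_eq _ _ _ (integ eta Hs 0 t)).
  destruct (Rle_dec t 0) as [h0|h0].
  - rewrite (RiemannInt_P8 (integ eta Hs 0 t) (integ eta Hs t 0)).
    rewrite (int_zero _ _ _ _ h0).
    + assert (0 <= RiemannInt (integ eta Hs 0 1)) by (apply int_nonneg; auto; lra). lra.
    + intros x hx. apply Hz. lra.
  - destruct (Rle_dec t 1) as [h1|h1].
    + split. apply int_nonneg; auto; lra.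
      rewrite <- Hd, <- (RiemannInt_P26 (integ eta Hs 0 t) (integ eta Hs t 1)).
      assert (0 <= RiemannInt (integ eta Hs t 1)) by (apply int_nonneg; auto). lra.
    + rewrite <- (RiemannInt_P26 (integ eta Hs 0 1) (integ eta Hs 1 t)).
      rewrite (int_zero _ _ _ _ (Rlt_le _ _ (Rnot_le_lt _ _ h1))).
      * assert (0 <= RiemannInt (integ eta Hs 0 1)) by (apply int_nonneg; auto; lra). lra.
      * intros x hx. apply Hz. lra.
Qed.

Lemma consts alpha : / 2 < alpha < / sqrt 2 ->
  0 < alpha /\ 0 < delta_c alpha /\ 0 < eps_c alpha /\
  alpha * (sqrt 2 + eps_c alpha) = 1 - 3 * delta_c alpha /\
  alpha * (2 + eps_c alpha) < sqrt 2.
Proof.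
  intros [h1 h2].
  assert (hq : sqrt 2 * sqrt 2 = 2) by (apply sqrt_sqrt; lra).
  set (q := sqrt 2) in *.
  assert (hq0 : 0 < q) by (unfold q; apply sqrt_lt_R0; lra).
  assert (hqi : / q = q / 2).
  { apply Rmult_eq_reg_l with q; [|lra]. rewrite Rinv_r; lra. }
  assert (hq2 : / (2 * q) = q / 4).
  { apply Rmult_eq_reg_l with (2*q); [|lra]. rewrite Rinv_r; lra. }
  rewrite hqi in h2.
  assert (ha : 0 < alpha) by lra.
  assert (haq : alpha * q < 1) by nra.
  assert (hai : q < / alpha).
  { apply Rmult_lt_reg_l with alpha; auto. rewrite Rinv_r; lra. }
  assert (h4 : / (4 * alpha) = / 4 * / alpha) by (field; lra).
  unfold eps_c, delta_c. fold q. rewrite hq2, h4. unfold Rdiv.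
  assert (hb : alpha * / alpha = 1) by (field; lra).
  assert (hq1 : 1 < q) by nra.
  assert (hh : 0 < (q - /4) * (1 - alpha * q)) by (apply Rmult_lt_0_compat; lra).
  repeat split; try lra; try nra.
Qed.

Lemma sq_bound a b r : 0 < r -> a^2 + b^2 < r^2 -> -r < a < r /\ -r < b < r.
Proof. intros. split; split; nra. Qed.

Lemma closure_rect (S : pt -> Prop) e x : closure S x -> (forall y, S y -> Rect e y) -> Rect e x.
Proof.
  intros Hc HS. unfold Rect.
  destruct x as [x1 x2]; simpl.
  assert (K : forall r, 0 < r -> exists y, Rect e y /\ (x1 - fst y)^2 + (x2 - snd y)^2 < r^2).
  { intros r hr. destruct (Hc r hr) as [y [hy hd]]. exists y. auto. }
  repeat split; apply Rnot_lt_le; intro h.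
  - destruct (K (-2 - e - x1)) as [[y1 y2] [[[? ?] [? ?]] hd]]; [lra|]; simpl in *.
    apply sq_bound in hd; lra.
  - destruct (K (x1 - (2 + e))) as [[y1 y2] [[[? ?] [? ?]] hd]]; [lra|]; simpl in *.
    apply sq_bound in hd; lra.
  - destruct (K (- sqrt 2 - e - x2)) as [[y1 y2] [[[? ?] [? ?]] hd]]; [lra|]; simpl in *.
    apply sq_bound in hd; lra.
  - destruct (K (x2 - (sqrt 2 + e))) as [[y1 y2] [[[? ?] [? ?]] hd]]; [lra|]; simpl in *.
    apply sq_bound in hd; lra.
Qed.

Lemma notB e d r x : 0 < d -> 0 < r ->
  ((d + r <= fst x /\ fst x + r <= 2) \/ (d + r <= - fst x /\ - fst x + r <= 2)) ->
  - sqrt 2 + r <= snd x <= sqrt 2 - r ->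
  ~ closure (fun y => Rect e y /\ ~ (Rect 0 y /\ (Hplus d y \/ Hminus d y))) x.
Proof.
  intros hd hr h1 h2 Hc. destruct (Hc r hr) as [[y1 y2] [[_ hn] hdist]].
  destruct x as [x1 x2]; simpl in *. apply sq_bound in hdist; auto.
  apply hn. unfold Rect, Hplus, Hminus; simpl. split; [lra|]. lra.
Qed.

Lemma geo alpha (eta : R -> R) t i p :
  / 2 < alpha < / sqrt 2 ->
  0 <= Rint eta 0 t <= delta_c alpha ->
  Rect (eps_c alpha) p ->
  let z := Fmap alpha eta t i p in
  Rect (eps_c alpha) z /\ ~ Bset alpha z /\
  (i = L1 -> 0 < fst z) /\ (i = L2 -> fst z < 0).
Proof.
  intros Ha Hs Hp z.
  destruct (consts alpha Ha) as [ha [hd [he [h3 h4]]]].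
  set (s := Rint eta 0 t) in *. set (d := delta_c alpha) in *. set (e := eps_c alpha) in *.
  set (q := sqrt 2) in *.
  destruct p as [p1 p2]. unfold Rect in Hp; simpl in Hp. fold q in Hp.
  destruct Hp as [[a1 a2] [b1 b2]].
  assert (c1 : alpha * (q + e - p2) >= 0) by (apply Rle_ge, Rmult_le_pos; lra).
  assert (c2 : alpha * (q + e + p2) >= 0) by (apply Rle_ge, Rmult_le_pos; lra).
  assert (c3 : alpha * (2 + e - p1) >= 0) by (apply Rle_ge, Rmult_le_pos; lra).
  assert (c4 : alpha * (2 + e + p1) >= 0) by (apply Rle_ge, Rmult_le_pos; lra).
  set (m := q - alpha * (2 + e)).
  assert (hm : 0 < m) by (unfold m; lra).
  set (r := Rmin d m).
  assert (hr : 0 < r) by (apply Rmin_glb_lt; auto).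
  assert (hr1 : r <= d) by apply Rmin_l.
  assert (hr2 : r <= m) by apply Rmin_r.
  unfold m in hr2.
  assert (hq : 1 < q).
  { unfold q. rewrite <- sqrt_1. apply sqrt_lt_1; lra. }
  unfold z, Fmap, rot, Bset, Rect; simpl; fold s; fold q; fold e.
  destruct i; simpl.
  - repeat split; try lra; try (intros; discriminate).
    + apply (notB e d r); simpl; [auto|auto|left; split; lra|fold q; split; lra].
  - repeat split; try lra; try (intros; discriminate).
    + apply (notB e d r); simpl; [auto|auto|right; split; lra|fold q; split; lra].
Qed.

Lemma B_rect alpha x : Bset alpha x -> Rect (eps_c alpha) x.
Proof. intro h. apply (closure_rect _ _ _ h). intros y [hy _]. exact hy. Qed.

Lemma word_rect alpha (eta : R -> R) t w x :
  / 2 < alpha < / sqrt 2 -> 0 <= Rint eta 0 t <= delta_c alpha ->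
  Rect (eps_c alpha) x -> Rect (eps_c alpha) (Fword alpha eta t w x).
Proof.
  intros Ha Hs Hx. induction w as [|i v IH]; simpl; auto.
  apply (geo alpha eta t i _ Ha Hs IH).
Qed.

Lemma fmap_inj alpha (eta : R -> R) t i x x' : 0 < alpha ->
  Fmap alpha eta t i x = Fmap alpha eta t i x' -> x = x'.
Proof.
  intros ha h. destruct x as [x1 x2], x' as [y1 y2].
  unfold Fmap, rot in h; simpl in h.
  destruct i; injection h as h1 h2;
  f_equal; apply Rmult_eq_reg_l with alpha; lra.
Qed.

Lemma main_lem alpha (eta : R -> R) t :
  / 2 < alpha < / sqrt 2 -> 0 <= Rint eta 0 t <= delta_c alpha ->
  forall w w' x x', w <> w' -> Bset alpha x -> Bset alpha x' ->
  Fword alpha eta t w x = Fword alpha eta t w' x' -> False.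
Proof.
  intros Ha Hs w. induction w as [|i v IH]; intros w' x x' hne hx hx' heq.
  - destruct w' as [|j v']; [apply hne; reflexivity|].
    simpl in heq.
    destruct (geo alpha eta t j (Fword alpha eta t v' x') Ha Hs
      (word_rect _ _ _ _ _ Ha Hs (B_rect _ _ hx'))) as [_ [hb _]].
    apply hb. rewrite <- heq. exact hx.
  - destruct w' as [|j v'].
    + simpl in heq.
      destruct (geo alpha eta t i (Fword alpha eta t v x) Ha Hs
        (word_rect _ _ _ _ _ Ha Hs (B_rect _ _ hx))) as [_ [hb _]].
      apply hb. rewrite heq. exact hx'.
    + simpl in heq.
      destruct (consts alpha Ha) as [ha _].
      assert (gi := geo alpha eta t i (Fword alpha eta t v x) Ha Hs
        (word_rect _ _ _ _ _ Ha Hs (B_rect _ _ hx))).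
      assert (gj := geo alpha eta t j (Fword alpha eta t v' x') Ha Hs
        (word_rect _ _ _ _ _ Ha Hs (B_rect _ _ hx'))).
      simpl in gi, gj.
      destruct gi as [_ [_ [gi1 gi2]]], gj as [_ [_ [gj1 gj2]]].
      destruct i, j.
      * apply (IH v' x x'); auto. intro e; apply hne; subst; reflexivity.
        exact (fmap_inj _ _ _ _ _ _ ha heq).
      * specialize (gi1 eq_refl). specialize (gj2 eq_refl). rewrite heq in gi1. lra.
      * specialize (gi2 eq_refl). specialize (gj1 eq_refl). rewrite heq in gi2. lra.
      * apply (IH v' x x'); auto. intro e; apply hne; subst; reflexivity.
        exact (fmap_inj _ _ _ _ _ _ ha heq).
Qed.

Theorem lemma2p8 (alpha : R) (eta : R -> R)
  (Halpha : / 2 < alpha < / sqrt 2)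
  (Hsmooth : smooth eta)
  (Hnonneg : forall x, 0 <= eta x)
  (Hsupp : supp_in_01 eta)
  (Hint : Rint eta 0 1 = delta_c alpha)
  (w w' : list letter) (Hww : w <> w') (t : R) :
  forall y, ~ (image (Fword alpha eta t w) (Bset alpha) y /\
               image (Fword alpha eta t w') (Bset alpha) y).
Proof.
  intros y [[x [hx e]] [x' [hx' e']]].
  apply (main_lem alpha eta t Halpha
    (s_bounds eta _ Hsmooth Hnonneg Hsupp Hint t) w w' x x' Hww hx hx').
  congruence.
Qed.
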